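(* Let $n=n_1+\cdots+n_s$ with $n_i\ge 1$ and let $M=Sp(n)/U(n_1)\times\cdots\times U(n_s)$ be the corresponding flag manifold. Then the set $\Pi_{\mathfrak t}$ of t-roots of $M$ is a root system of type $C_s$.
   Context: Let $\mathfrak g=\mathfrak{sp}(n,\mathbb C)$ with Cartan subalgebra $\mathfrak h$ of diagonal matrices $\mathrm{diag}(\varepsilon_1,\dots,\varepsilon_n,-\varepsilon_1,\dots,-\varepsilon_n)$, and root system $\Pi=\{\pm(\varepsilon_i\pm\varepsilon_j):1\le i<j\le n\}\cup\{\pm2\varepsilon_i\}$. Write $\varepsilon^i_a=\varepsilon_{n_1+\cdots+n_{i-1}+a}$, $1\le a\le n_i$. The isotropy subalgebra of $M$ has complexification $\mathfrak k^{\mathbb C}=\mathfrak h\oplus\bigoplus_{\alpha\in\Pi_\Theta}\mathfrak g_\alpha$, where $\Pi_\Theta=\{\pm(\varepsilon^i_a-\varepsilon^i_b):1\le i\le s,\ 1\le a<b\le n_i\}$; let $\Pi_M=\Pi\setminus\Pi_\Theta$. Let $\mathfrak h_{\mathbb R}$ be the real span of the coroots $H_\alpha$ and $\mathfrak t=\{H\in i\mathfrak h_{\mathbb R}:\alpha(H)=0\text{ for all }\alpha\in\Pi_\Theta\}$. With $k:(i\mathfrak h_{\mathbb R})^*\to\mathfrak t^*$ the restriction map, the t-roots are $\Pi_{\mathfrak t}=k(\Pi_M)$. *)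

(* Defs.v *)
From HB Require Import structures.
From mathcomp Require Import all_boot all_order all_algebra.
Set Implicit Arguments. Unset Strict Implicit. Unset Printing Implicit Defensive.
Import Order.TTheory GRing.Theory Num.Theory.
Local Open Scope ring_scope.

(* Coordinates: H = i diag(x_1..x_n,-x_1..-x_n) in i h_R is identified with
   the row vector x : 'rV[R]_n; a real linear functional on i h_R is a row
   vector alpha acting by the pairing below.  eps j is epsilon_{j+1}. *)
Definition eps (R : nzRingType) (n : nat) (j : 'I_n) : 'rV[R]_n := delta_mx 0 j.
Arguments eps {R n} j.

Definition pair (R : nzRingType) (n : nat) (alpha x : 'rV[R]_n) : R :=
  \sum_(j < n) alpha 0 j * x 0 j.

(* The standard root system of type C_m in R^m:
   {+-(e_i +- e_j) : i < j} u {+-2 e_i}.  For m = n it is the root system Pi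
   of sp(n,C). *)
Definition typeC_roots (R : nzRingType) (m : nat) : pred 'rV[R]_m :=
  [pred v | [exists i : 'I_m, exists j : 'I_m,
      (i < j)%N && [|| v == eps i + eps j, v == eps i - eps j,
                       v == - (eps i + eps j) | v == - (eps i - eps j)]]
         || [exists i : 'I_m, (v == 2%:R *: eps i) || (v == - (2%:R *: eps i))]].

(* Blocks: ns = [:: n_1; ...; n_s], block i (0-based) consists of the
   0-based indices j with n_1+..+n_i <= j < n_1+..+n_{i+1}. *)
Definition bstart (ns : seq nat) (i : nat) : nat := sumn (take i ns).
Definition in_block (ns : seq nat) (i j : nat) : bool :=
  (bstart ns i <= j < bstart ns i.+1)%N.
Definition same_block (ns : seq nat) (j k : nat) : bool :=
  [exists i : 'I_(size ns), in_block ns i j && in_block ns i k].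

Definition Pi_Theta (R : nzRingType) (ns : seq nat) : pred 'rV[R]_(sumn ns) :=
  [pred v | [exists j : 'I_(sumn ns), exists k : 'I_(sumn ns),
      [&& (j < k)%N, same_block ns j k &
          (v == eps j - eps k) || (v == - (eps j - eps k))]]].

Definition Pi_M (R : nzRingType) (ns : seq nat) : pred 'rV[R]_(sumn ns) :=
  [pred v | (v \in @typeC_roots R (sumn ns)) && (v \notin @Pi_Theta R ns)].

Definition in_t (R : nzRingType) (ns : seq nat) (x : 'rV[R]_(sumn ns)) : Prop :=
  forall alpha, alpha \in @Pi_Theta R ns -> pair alpha x = 0.

(* Main.v *)
Require Import Defs.
From HB Require Import structures.
From mathcomp Require Import all_boot all_order all_algebra.
From mathcomp Require Import zify.
Import Order.TTheory GRing.Theory Num.Theory.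
Local Open Scope ring_scope.

Section Pair.
Variable R : realFieldType.

Lemma pairE n (a x : 'rV[R]_n) : pair a x = (a *m x^T) 0 0.
Proof. by rewrite /pair mxE; apply: eq_bigr => j _; rewrite mxE. Qed.

Lemma pair_epsl n (j : 'I_n) (x : 'rV[R]_n) : pair (eps j) x = x 0 j.
Proof. by rewrite pairE /eps -rowE !mxE. Qed.

Lemma pair_epsr n (j : 'I_n) (a : 'rV[R]_n) : pair a (eps j) = a 0 j.
Proof. by rewrite pairE /eps trmx_delta -colE !mxE. Qed.

Lemma pairB n (a b x : 'rV[R]_n) : pair (a - b) x = pair a x - pair b x.
Proof. by rewrite !pairE mulmxBl !mxE. Qed.

Lemma pairN n (a x : 'rV[R]_n) : pair (- a) x = - pair a x.
Proof. by rewrite !pairE mulNmx !mxE. Qed.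

Lemma pair_mul m n (a : 'rV[R]_n) (y : 'rV[R]_m) (P : 'M[R]_(m, n)) :
  pair a (y *m P) = pair (a *m P^T) y.
Proof. by rewrite !pairE trmx_mul mulmxA. Qed.

Lemma pair_inj n (a b : 'rV[R]_n) : (forall y, pair a y = pair b y) -> a = b.
Proof. by move=> H; apply/rowP => i; rewrite -!pair_epsr H. Qed.

Lemma eps_entry n (j c : 'I_n) : (eps j : 'rV[R]_n) 0 c = (c == j)%:R.
Proof. by rewrite /eps mxE eqxx. Qed.

End Pair.
Arguments pair_inj {R n a b}.

Section Blocks.
Variable ns : seq nat.

Lemma bstart_mono i i' : (i <= i')%N -> (bstart ns i <= bstart ns i')%N.
Proof.
move=> le; rewrite /bstart -(subnKC le) takeD sumn_cat; apply: leq_addr.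
Qed.

Lemma bstart0 : bstart ns 0 = 0%N.
Proof. by rewrite /bstart take0. Qed.

Lemma bstart_size : bstart ns (size ns) = sumn ns.
Proof. by rewrite /bstart take_size. Qed.

Lemma bstartS i : (i < size ns)%N -> bstart ns i.+1 = (bstart ns i + nth 0 ns i)%N.
Proof. by move=> lt; rewrite /bstart (take_nth 0 lt) sumn_rcons. Qed.

Lemma blk_ex (j : 'I_(sumn ns)) : exists i : 'I_(size ns), in_block ns i j.
Proof.
suff H : forall k, (k <= size ns)%N -> (j < bstart ns k)%N ->
   exists i : 'I_(size ns), in_block ns i j.
  by apply: (H (size ns)) => //; rewrite bstart_size.
elim=> [|k IH] le; first by rewrite bstart0.
case: (ltnP j (bstart ns k)) => h1 h2.
  by apply: IH => //; apply: ltnW.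
by exists (Ordinal le); rewrite /in_block /= h1 h2.
Qed.

Lemma in_block_uniq (i i' j : nat) : in_block ns i j -> in_block ns i' j -> i = i'.
Proof.
rewrite /in_block => /andP [a b] /andP [c d].
case: (ltngtP i i') => // h.
  have := bstart_mono _ _ h; lia.
have := bstart_mono _ _ h; lia.
Qed.

Definition blk (j : 'I_(sumn ns)) : 'I_(size ns) := xchoose (blk_ex j).

Lemma blkP (j : 'I_(sumn ns)) : in_block ns (blk j) j.
Proof. exact: (xchooseP (blk_ex j)). Qed.

Lemma blk_eq (j : 'I_(sumn ns)) (i : 'I_(size ns)) : in_block ns i j -> blk j = i.
Proof. move=> h; apply: val_inj; exact: (in_block_uniq _ _ _ (blkP j) h). Qed.

Lemma blk_mono (j k : 'I_(sumn ns)) : (j <= k)%N -> (blk j <= blk k)%N.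
Proof.
move=> le; rewrite leqNgt; apply/negP => lt.
have := bstart_mono _ _ lt; move: (blkP j) (blkP k); rewrite /in_block; lia.
Qed.

Lemma same_blockE (j k : 'I_(sumn ns)) : same_block ns j k = (blk j == blk k).
Proof.
apply/existsP/eqP => [[i /andP [h1 h2]]|e].
  by rewrite (blk_eq _ _ h1) (blk_eq _ _ h2).
by exists (blk k); rewrite -{1}e !blkP.
Qed.

Hypothesis hpos : all (fun m => 0 < m)%N ns.

Lemma bstart_lt_next (i : 'I_(size ns)) : (bstart ns i < bstart ns i.+1)%N.
Proof.
rewrite bstartS //; have /= h := allP hpos _ (mem_nth 0%N (ltn_ord i)); lia.
Qed.

Lemma bstart_lt (i : 'I_(size ns)) : (bstart ns i < sumn ns)%N.
Proof.
have := bstart_lt_next i; have := bstart_mono _ _ (ltn_ord i); rewrite bstart_size; lia.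
Qed.

Lemma bstart_strict (i i' : 'I_(size ns)) : (i < i')%N -> (bstart ns i < bstart ns i')%N.
Proof. move=> lt; have := bstart_mono _ _ lt; have := bstart_lt_next i; lia. Qed.

Lemma blk_rep (i : 'I_(size ns)) : blk (Ordinal (bstart_lt i)) = i.
Proof. by apply: blk_eq; rewrite /in_block /= leqnn bstart_lt_next. Qed.

End Blocks.
Arguments blk {ns}.
Arguments blkP {ns}.
Arguments same_blockE {ns}.
Arguments blk_mono {ns j k}.
Arguments bstart_lt {ns} hpos i.
Arguments bstart_strict {ns} hpos {i i'}.
Arguments blk_rep {ns} hpos i.

From mathcomp Require Import lra.

Section Roots.
Variable R : realFieldType.

Lemma typeC_ind m (P : 'rV[R]_m -> Prop) (v : 'rV[R]_m) :
  (forall i j : 'I_m, (i < j)%N -> P (eps i + eps j)) ->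
  (forall i j : 'I_m, (i < j)%N -> P (eps i - eps j)) ->
  (forall i j : 'I_m, (i < j)%N -> P (- (eps i + eps j))) ->
  (forall i j : 'I_m, (i < j)%N -> P (- (eps i - eps j))) ->
  (forall i : 'I_m, P (2%:R *: eps i)) ->
  (forall i : 'I_m, P (- (2%:R *: eps i))) ->
  v \in @typeC_roots R m -> P v.
Proof.
move=> h1 h2 h3 h4 h5 h6; rewrite inE => /orP
  [/existsP [i /existsP [j /andP [lij /or4P [] /eqP ->]]]| /existsP [i /orP [] /eqP ->]]; auto.
Qed.

Lemma tC1 m (i j : 'I_m) : (i < j)%N -> eps i + eps j \in @typeC_roots R m.
Proof. by move=> h; rewrite inE; apply/orP; left; apply/existsP; exists i; apply/existsP; exists j; rewrite h eqxx. Qed.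
Lemma tC2 m (i j : 'I_m) : (i < j)%N -> eps i - eps j \in @typeC_roots R m.
Proof. by move=> h; rewrite inE; apply/orP; left; apply/existsP; exists i; apply/existsP; exists j; rewrite h eqxx !orbT. Qed.
Lemma tC3 m (i j : 'I_m) : (i < j)%N -> - (eps i + eps j) \in @typeC_roots R m.
Proof. by move=> h; rewrite inE; apply/orP; left; apply/existsP; exists i; apply/existsP; exists j; rewrite h eqxx !orbT. Qed.
Lemma tC4 m (i j : 'I_m) : (i < j)%N -> - (eps i - eps j) \in @typeC_roots R m.
Proof. by move=> h; rewrite inE; apply/orP; left; apply/existsP; exists i; apply/existsP; exists j; rewrite h eqxx !orbT. Qed.
Lemma tC5 m (i : 'I_m) : 2%:R *: eps i \in @typeC_roots R m.
Proof. by rewrite inE; apply/orP; right; apply/existsP; exists i; rewrite eqxx. Qed.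
Lemma tC6 m (i : 'I_m) : - (2%:R *: eps i) \in @typeC_roots R m.
Proof. by rewrite inE; apply/orP; right; apply/existsP; exists i; rewrite eqxx orbT. Qed.

Lemma Theta_sign ns (v : 'rV[R]_(sumn ns)) : v \in @Pi_Theta R ns ->
  exists p q, v 0 p = -1 /\ v 0 q = 1.
Proof.
rewrite inE => /existsP [j /existsP [k /and3P [ljk _ /orP [] /eqP ->]]].
  have ne1 : (k == j) = false by apply/eqP => e; move: ljk; rewrite e ltnn.
  have ne2 : (j == k) = false by apply/eqP => e; move: ljk; rewrite e ltnn.
  exists k, j; rewrite !mxE !eqxx ne1 ne2 /=; split; lra.
have ne1 : (k == j) = false by apply/eqP => e; move: ljk; rewrite e ltnn.
have ne2 : (j == k) = false by apply/eqP => e; move: ljk; rewrite e ltnn.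
exists j, k; rewrite !mxE !eqxx ne1 ne2 /=; split; lra.
Qed.

Lemma nonneg_notTheta ns (v : 'rV[R]_(sumn ns)) :
  (forall c, 0 <= v 0 c) -> v \notin @Pi_Theta R ns.
Proof.
move=> h; apply/negP => /Theta_sign [p [q [hp _]]]; have := h p; rewrite hp; lra.
Qed.

Lemma nonpos_notTheta ns (v : 'rV[R]_(sumn ns)) :
  (forall c, v 0 c <= 0) -> v \notin @Pi_Theta R ns.
Proof.
move=> h; apply/negP => /Theta_sign [p [q [_ hq]]]; have := h q; rewrite hq; lra.
Qed.

Lemma nat_ge0 (b : bool) : 0 <= (b%:R : R).
Proof. by case: b => /=; lra. Qed.

Lemma bool_diff1 (x y : bool) : (1 : R) = x%:R - y%:R -> x.
Proof. by case: x; case: y => //=; lra. Qed.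
Lemma bool_diff2 (x y : bool) : (-1 : R) = x%:R - y%:R -> y.
Proof. by case: x; case: y => //=; lra. Qed.

Lemma eps_diff_eq m (a b j k : 'I_m) : a != b ->
  (eps a - eps b : 'rV[R]_m) = eps j - eps k -> a = j /\ b = k.
Proof.
move=> nab E.
have Ea := congr1 (fun v : 'rV[R]_m => v 0 a) E.
have Eb := congr1 (fun v : 'rV[R]_m => v 0 b) E.
move: Ea Eb; rewrite /= !mxE !eqxx /= (negbTE nab) (eq_sym b a) (negbTE nab) /=.
rewrite ?mulr1n ?mulr0n subr0 sub0r => /bool_diff1/eqP -> /bool_diff2/eqP ->; by [].
Qed.

End Roots.
Arguments typeC_ind {R m P v}.
Arguments tC1 {R m i j}. Arguments tC2 {R m i j}. Arguments tC3 {R m i j}. Arguments tC4 {R m i j}.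
Arguments tC5 {R m i}. Arguments tC6 {R m i}.
Arguments nonneg_notTheta {R ns v}. Arguments nonpos_notTheta {R ns v}.
Arguments nat_ge0 {R}. Arguments eps_diff_eq {R m a b j k}.

Lemma notTheta_diff (R : realFieldType) ns (a b : 'I_(sumn ns)) :
  blk a != blk b -> (eps a - eps b : 'rV[R]_(sumn ns)) \notin @Pi_Theta R ns.
Proof.
move=> nb; have nab : a != b by apply: contraNneq nb => ->.
apply/negP; rewrite inE => /existsP [j /existsP [k /and3P [_ sb /orP [] /eqP E]]].
  have [ea eb] := eps_diff_eq nab E.
  by move: sb; rewrite -ea -eb same_blockE (negbTE nb).
rewrite opprB in E; have [ea eb] := eps_diff_eq nab E.
by move: sb; rewrite -ea -eb same_blockE eq_sym (negbTE nb).
Qed.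

Theorem theorem2p7 (R : realFieldType) (ns : seq nat)
  (hpos : all (fun m => 0 < m)%N ns) :
  exists psi : 'M[R]_(size ns, sumn ns),
    [/\ row_free psi,
        (forall x : 'rV[R]_(sumn ns), @in_t R ns x <-> exists y : 'rV[R]_(size ns), x = y *m psi) &
        (forall beta : 'rV[R]_(size ns),
           beta \in @typeC_roots R (size ns) <->
           exists2 alpha, alpha \in @Pi_M R ns &
             forall y : 'rV[R]_(size ns), pair alpha (y *m psi) = pair beta y)].
Proof.
pose rep (i : 'I_(size ns)) : 'I_(sumn ns) := Ordinal (bstart_lt hpos i).
have brep : forall i, blk (rep i) = i by move=> i; apply: (blk_rep hpos).
have rep_lt : forall i i' : 'I_(size ns), (i < i')%N -> (rep i < rep i')%N.
  by move=> i i' h; apply: (bstart_strict hpos).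
pose psi := \matrix_(i < size ns, j < sumn ns) ((blk j == i)%:R : R).
have Heps : forall j, (eps j : 'rV[R]_(sumn ns)) *m psi^T = eps (blk j).
  by move=> j; rewrite /eps -rowE; apply/rowP => i; rewrite !mxE eqxx eq_sym.
have Hx : forall (y : 'rV[R]_(size ns)) (j : 'I_(sumn ns)), (y *m psi) 0 j = y 0 (blk j).
  by move=> y j; rewrite -(pair_epsl _ _ j (y *m psi)) pair_mul Heps pair_epsl.
exists psi; split.
- apply: inj_row_free => v hv; apply/rowP => i.
  by have := Hx v (rep i); rewrite hv brep !mxE => <-.
- move=> x; split.
  + move=> ht; exists (\row_i x 0 (rep i)); apply/rowP => j; rewrite Hx mxE.
    set k := rep (blk j).
    have sb : same_block ns j k by rewrite same_blockE brep.
    case: (ltngtP j k) => h.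
    * have hm : (eps j - eps k : 'rV[R]_(sumn ns)) \in @Pi_Theta R ns.
        by rewrite inE; apply/existsP; exists j; apply/existsP; exists k; rewrite h sb eqxx.
      have := ht _ hm; rewrite pairB !pair_epsl => /eqP.
      by rewrite subr_eq0 => /eqP.
    * have hm : (eps k - eps j : 'rV[R]_(sumn ns)) \in @Pi_Theta R ns.
        rewrite inE; apply/existsP; exists k; apply/existsP; exists j; rewrite h eqxx.
        by rewrite same_blockE eq_sym -same_blockE sb.
      have := ht _ hm; rewrite pairB !pair_epsl => /eqP.
      by rewrite subr_eq0 => /eqP.
    * by rewrite (val_inj h).
  + move=> [y ->] alpha; rewrite inE => /existsP [j /existsP [k /and3P [_ sb /orP [] /eqP ->]]];
      rewrite ?pairN pairB !pair_epsl !Hx; move: sb; rewrite same_blockE => /eqP ->;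
      by rewrite subrr ?oppr0.
- move=> beta; split.
  + have PM : forall a, a \in @typeC_roots R (sumn ns) -> a \notin @Pi_Theta R ns ->
       a \in @Pi_M R ns by move=> a h1 h2; rewrite inE h1 h2.
    apply: (typeC_ind (P := fun b => exists2 alpha, alpha \in @Pi_M R ns &
             forall y : 'rV[R]_(size ns), pair alpha (y *m psi) = pair b y)).
    * move=> i i' h; exists (eps (rep i) + eps (rep i')).
        apply: PM; first exact: tC1 (rep_lt _ _ h).
        by apply: nonneg_notTheta => c; rewrite !mxE; apply: addr_ge0; apply: nat_ge0.
      by move=> y; rewrite pair_mul mulmxDl !Heps !brep.
    * move=> i i' h; exists (eps (rep i) - eps (rep i')).
        apply: PM; first exact: tC2 (rep_lt _ _ h).
        by apply: notTheta_diff; rewrite !brep; apply: contraTneq h => ->; rewrite ltnn.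
      by move=> y; rewrite pair_mul mulmxBl !Heps !brep.
    * move=> i i' h; exists (- (eps (rep i) + eps (rep i'))).
        apply: PM; first exact: tC3 (rep_lt _ _ h).
        apply: nonpos_notTheta => c; rewrite !mxE oppr_le0.
        by apply: addr_ge0; apply: nat_ge0.
      by move=> y; rewrite pair_mul mulNmx mulmxDl !Heps !brep.
    * move=> i i' h; exists (- (eps (rep i) - eps (rep i'))).
        apply: PM; first exact: tC4 (rep_lt _ _ h).
        rewrite opprB; apply: notTheta_diff; rewrite !brep.
        by apply: contraTneq h => ->; rewrite ltnn.
      by move=> y; rewrite pair_mul mulNmx mulmxBl !Heps !brep.
    * move=> i; exists (2%:R *: eps (rep i)).
        apply: PM; first exact: tC5.
        by apply: nonneg_notTheta => c; rewrite !mxE; apply: mulr_ge0; [exact: ler0n | exact: nat_ge0].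
      by move=> y; rewrite pair_mul -scalemxAl Heps brep.
    * move=> i; exists (- (2%:R *: eps (rep i))).
        apply: PM; first exact: tC6.
        apply: nonpos_notTheta => c; rewrite !mxE oppr_le0.
        by apply: mulr_ge0; [exact: ler0n | exact: nat_ge0].
      by move=> y; rewrite pair_mul mulNmx -scalemxAl Heps brep.
  + move=> [alpha]; rewrite inE => /andP [hC hT] H.
    have -> : beta = alpha *m psi^T by apply: pair_inj => y; rewrite -H pair_mul.
    move: hT; apply: (typeC_ind (P := fun a => a \notin @Pi_Theta R ns ->
        a *m psi^T \in @typeC_roots R (size ns)) _ _ _ _ _ _ hC).
    * move=> j k h _; rewrite mulmxDl !Heps.
      case: (blk j =P blk k) => [->|ne].
        by rewrite -mulr2n -scaler_nat; apply: tC5.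
      apply: tC1; rewrite ltn_neqAle blk_mono ?andbT; last exact: ltnW.
      by apply/eqP => e; apply: ne; apply: val_inj.
    * move=> j k h hT; rewrite mulmxBl !Heps.
      have ne : blk j != blk k.
        apply: contra hT => e; rewrite inE; apply/existsP; exists j; apply/existsP; exists k.
        by rewrite h same_blockE e eqxx.
      apply: tC2; rewrite ltn_neqAle blk_mono ?andbT; last exact: ltnW.
      exact: ne.
    * move=> j k h _; rewrite mulNmx mulmxDl !Heps.
      case: (blk j =P blk k) => [->|ne].
        by rewrite -mulr2n -scaler_nat; apply: tC6.
      apply: tC3; rewrite ltn_neqAle blk_mono ?andbT; last exact: ltnW.
      by apply/eqP => e; apply: ne; apply: val_inj.
    * move=> j k h hT; rewrite mulNmx mulmxBl !Heps.
      have ne : blk j != blk k.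
        apply: contra hT => e; rewrite inE; apply/existsP; exists j; apply/existsP; exists k.
        by rewrite h same_blockE e eqxx orbT.
      apply: tC4; rewrite ltn_neqAle blk_mono ?andbT; last exact: ltnW.
      exact: ne.
    * by move=> j _; rewrite -scalemxAl Heps; apply: tC5.
    * by move=> j _; rewrite mulNmx -scalemxAl Heps; apply: tC6.
Qed.
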